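(* For any integer $m\ge 1$ and all $z,\xi\in\mathbb{B}_N$, $$\big(|E_\xi+m|^2-\Delta_\xi\big)\cdots\big(|E_\xi+1|^2-\Delta_\xi\big)\big(|E_\xi|^2-\Delta_\xi\big)\Big\{\frac{1}{|1-\langle z,\xi\rangle|^2}\Big\}=|E_z|^2\Big\{\frac{(m!)^2(1-|z|^2)^{m+1}}{|1-\langle z,\xi\rangle|^{2(m+1)}}\Big\},$$ and $$\big(|E_\xi+m|^2-\Delta_\xi\big)\cdots\big(|E_\xi|^2-\Delta_\xi\big)\Big\{\frac{1-|\xi|^2}{|1-\langle z,\xi\rangle|^2}\Big\}=\big(|E_z|^2-\Delta_z\big)\Big\{\frac{(m!)^2(1-|z|^2)^{m+1}}{|1-\langle z,\xi\rangle|^{2(m+1)}}\Big\}.$$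
   Context: $\mathbb{B}_N$ is the unit ball of $\mathbb{C}^N$ and $\langle z,\xi\rangle=\sum_j z_j\bar\xi_j$. The operators are $E_z=\sum_{j=1}^N z_j\partial/\partial z_j$, $\bar E_z=\sum_{j=1}^N\bar z_j\partial/\partial\bar z_j$, $\Delta_z=\sum_{j=1}^N\partial^2/\partial z_j\partial\bar z_j$, and for a real number $s$, $|E_z+s|^2=(E_z+s)(\bar E_z+s)$; subscripts $\xi$ denote the same operators acting in the variable $\xi$. Products of operators denote composition. *)

(* Defs.v *)
From Stdlib Require Import Reals Factorial.
From Coquelicot Require Import Coquelicot.

(* A point of C^N is represented as a function nat -> C; only the coordinates
   j < N are relevant (all sums below range over j < N). *)
Definition vec := nat -> C.

Fixpoint Csum (N : nat) (f : nat -> C) : C :=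
  match N with
  | O => RtoC 0
  | S n => Cplus (Csum n f) (f n)
  end.

Definition cinner (N : nat) (z xi : vec) : C :=
  Csum N (fun j => Cmult (z j) (Cconj (xi j))).

Definition cnorm2 (N : nat) (z : vec) : R :=
  Re (Csum N (fun j => RtoC (Cmod (z j) ^ 2))).

Definition inBall (N : nat) (z : vec) : Prop := cnorm2 N z < 1.

Definition upd (z : vec) (j : nat) (w : C) : vec :=
  fun k => if Nat.eqb k j then w else z k.

(* real partial derivatives w.r.t. x_j and y_j, where z_j = x_j + i y_j *)
Definition dx (j : nat) (F : vec -> C) : vec -> C := fun z =>
  (Derive (fun t => fst (F (upd z j (t, snd (z j))))) (fst (z j)),
   Derive (fun t => snd (F (upd z j (t, snd (z j))))) (fst (z j))).
Definition dy (j : nat) (F : vec -> C) : vec -> C := fun z =>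
  (Derive (fun t => fst (F (upd z j (fst (z j), t)))) (snd (z j)),
   Derive (fun t => snd (F (upd z j (fst (z j), t)))) (snd (z j))).

Definition dz (j : nat) (F : vec -> C) : vec -> C := fun z =>
  Cmult (RtoC (/2)) (Cminus (dx j F z) (Cmult Ci (dy j F z))).
Definition dzb (j : nat) (F : vec -> C) : vec -> C := fun z =>
  Cmult (RtoC (/2)) (Cplus (dx j F z) (Cmult Ci (dy j F z))).

Definition Eop (N : nat) (F : vec -> C) : vec -> C := fun z =>
  Csum N (fun j => Cmult (z j) (dz j F z)).
Definition Ebop (N : nat) (F : vec -> C) : vec -> C := fun z =>
  Csum N (fun j => Cmult (Cconj (z j)) (dzb j F z)).
Definition Lap (N : nat) (F : vec -> C) : vec -> C := fun z =>
  Csum N (fun j => dz j (dzb j F) z).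

(* |E + s|^2 = (E + s)(Ebar + s) *)
Definition absEs (N : nat) (s : R) (F : vec -> C) : vec -> C :=
  let G := fun z => Cplus (Ebop N F z) (Cmult (RtoC s) (F z)) in
  fun z => Cplus (Eop N G z) (Cmult (RtoC s) (G z)).

Definition Lop (N : nat) (s : R) (F : vec -> C) : vec -> C := fun z =>
  Cminus (absEs N s F z) (Lap N F z).

Fixpoint Lchain (N : nat) (m : nat) (F : vec -> C) : vec -> C :=
  match m with
  | O => Lop N 0 F
  | S k => Lop N (INR (S k)) (Lchain N k F)
  end.

(* Main.v *)
Require Import Defs.
From Stdlib Require Import Reals Factorial Lra Lia FunctionalExtensionality List.
From Coquelicot Require Import Coquelicot.

Open Scope R_scope.


Open Scope R_scope.

Lemma isd_mult (f g : R -> R) x df dg :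
  is_derive f x df -> is_derive g x dg ->
  is_derive (fun t => f t * g t) x (df * g x + f x * dg).
Proof. intros Hf Hg. exact (is_derive_mult f g x df dg Hf Hg Rmult_comm). Qed.
Lemma isd_plus (f g : R -> R) x df dg :
  is_derive f x df -> is_derive g x dg ->
  is_derive (fun t => f t + g t) x (df + dg).
Proof. intros Hf Hg. exact (is_derive_plus f g x df dg Hf Hg). Qed.
Lemma isd_minus (f g : R -> R) x df dg :
  is_derive f x df -> is_derive g x dg ->
  is_derive (fun t => f t - g t) x (df - dg).
Proof. intros Hf Hg. exact (is_derive_minus f g x df dg Hf Hg). Qed.
Lemma isd_const (a x : R) : is_derive (fun _ => a) x 0.
Proof. exact (is_derive_const a x). Qed.
Lemma isd_id (x : R) : is_derive (fun t => t) x 1.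
Proof. exact (is_derive_id x). Qed.
Lemma isd_ext (f g : R -> R) x l : (forall t, f t = g t) -> is_derive f x l -> is_derive g x l.
Proof. intros H; apply is_derive_ext; auto. Qed.
Lemma isd_val (f : R -> R) x l l' : l = l' -> is_derive f x l -> is_derive f x l'.
Proof. intros ->; auto. Qed.

Definition CD (h : R -> C) (t : R) (l : C) :=
  is_derive (fun s => fst (h s)) t (fst l) /\ is_derive (fun s => snd (h s)) t (snd l).

Lemma CD_ext h g t l : (forall s, h s = g s) -> CD h t l -> CD g t l.
Proof. intros E [H1 H2]; split; eapply isd_ext; eauto; intros; simpl; rewrite E; auto. Qed.
Lemma CD_val h t l l' : l = l' -> CD h t l -> CD h t l'.
Proof. intros ->; auto. Qed.
Lemma CD_const (c : C) t : CD (fun _ => c) t 0.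
Proof. split; apply isd_const. Qed.
Lemma CD_plus h g t l1 l2 : CD h t l1 -> CD g t l2 -> CD (fun s => Cplus (h s) (g s)) t (Cplus l1 l2).
Proof. intros [a b] [c d]; split; simpl; apply isd_plus; auto. Qed.
Lemma CD_minus h g t l1 l2 : CD h t l1 -> CD g t l2 -> CD (fun s => Cminus (h s) (g s)) t (Cminus l1 l2).
Proof. intros [a b] [c d]; split; simpl.
  - eapply isd_val; [|eapply isd_ext; [|apply (isd_minus _ _ _ _ _ a c)]]; simpl; [ring| intros; simpl; ring].
  - eapply isd_val; [|eapply isd_ext; [|apply (isd_minus _ _ _ _ _ b d)]]; simpl; [ring| intros; simpl; ring].
Qed.
Lemma CD_mult h g t l1 l2 : CD h t l1 -> CD g t l2 ->
  CD (fun s => Cmult (h s) (g s)) t (Cplus (Cmult l1 (g t)) (Cmult (h t) l2)).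
Proof. intros [a b] [c d]; split; simpl.
  - eapply isd_val; [|eapply isd_ext; [|apply (isd_minus _ _ _ _ _ (isd_mult _ _ _ _ _ a c) (isd_mult _ _ _ _ _ b d))]]; simpl; [ring| intros; simpl; ring].
  - eapply isd_val; [|eapply isd_ext; [|apply (isd_plus _ _ _ _ _ (isd_mult _ _ _ _ _ a d) (isd_mult _ _ _ _ _ b c))]]; simpl; [ring| intros; simpl; ring].
Qed.
Ltac nzt := match goal with
  | H : ?u * ?u + ?v * ?v <> 0 |- _ =>
    repeat split; try exact H;
    try (match goal with |- ?e <> 0 => replace e with ((u*u+v*v)*(u*u+v*v)) by ring end;
         apply Rmult_integral_contrapositive; split; exact H)
  end.
Lemma CD_inv h t l : CD h t l -> h t <> 0%C ->
  CD (fun s => Cinv (h s)) t (Copp (Cdiv l (Cmult (h t) (h t)))).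
Proof. intros [a b] Hn.
  assert (HD : fst (h t) ^ 2 + snd (h t) ^ 2 <> 0).
  { intro E; apply Hn. destruct (h t) as [u v]; simpl in E.
    assert (u = 0) by nra. assert (v = 0) by nra. subst; reflexivity. }
  pose proof (isd_plus _ _ _ _ _ (isd_mult _ _ _ _ _ a a) (isd_mult _ _ _ _ _ b b)) as D.
  pose proof (is_derive_inv _ _ _ D) as DI.
  assert (HD' : fst (h t) * fst (h t) + snd (h t) * snd (h t) <> 0) by (intro E; apply HD; rewrite <- E; ring).
  specialize (DI HD').
  split; simpl.
  - eapply isd_val; [|eapply isd_ext; [|apply (isd_mult _ _ _ _ _ a DI)]]; simpl.
    + destruct (h t) as [u v]; destruct l as [p q]; simpl in *. field. nzt.
    + intros; simpl; unfold Rdiv; rewrite !Rmult_1_r; reflexivity.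
  - eapply isd_val; [|eapply isd_ext; [|apply (isd_mult _ _ _ _ _ (is_derive_opp _ _ _ b) DI)]]; simpl.
    + destruct (h t) as [u v]; destruct l as [p q]; simpl in *. unfold opp; simpl. field. nzt.
    + intros; simpl; unfold Rdiv, opp; simpl; rewrite !Rmult_1_r; ring.
Qed.

Ltac ceq := apply injective_projections; simpl; field.

Lemma CD_id_re y t : CD (fun s => (s, y) : C) t 1.
Proof. split; simpl; [apply isd_id | apply isd_const]. Qed.
Lemma CD_id_im x t : CD (fun s => (x, s) : C) t Ci.
Proof. split; simpl; [apply isd_const | apply isd_id]. Qed.

Definition WD (H : C -> C) (w : C) (P Q : C) :=
  CD (fun t => H (t, snd w)) (fst w) (Cplus P Q) /\
  CD (fun t => H (fst w, t)) (snd w) (Cmult Ci (Cminus P Q)).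

Lemma WD_ext H G w P Q : (forall v, H v = G v) -> WD H w P Q -> WD G w P Q.
Proof. intros E [a b]; split; eapply CD_ext; eauto; intros; simpl; auto. Qed.
Lemma WD_val H w P Q P' Q' : P = P' -> Q = Q' -> WD H w P Q -> WD H w P' Q'.
Proof. intros -> ->; auto. Qed.
Lemma WD_const (c : C) w : WD (fun _ => c) w 0 0.
Proof. split; (eapply CD_val; [|apply CD_const]); ceq. Qed.
Lemma WD_id w : WD (fun v => v) w 1 0.
Proof. split.
  - eapply CD_val; [|eapply CD_ext; [|apply (CD_id_re (snd w))]]; [ceq|reflexivity].
  - eapply CD_val; [|eapply CD_ext; [|apply (CD_id_im (fst w))]]; [ceq|reflexivity].
Qed.
Lemma WD_conj w : WD (fun v => Cconj v) w 0 1.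
Proof. split.
  - split; simpl; [eapply isd_val; [|apply isd_id]; simpl; ring | eapply isd_val; [|apply isd_const]; simpl; ring].
  - split; simpl; [eapply isd_val; [|apply isd_const]; simpl; ring | ].
    eapply isd_val; [|apply (is_derive_opp _ _ _ (isd_id _))]; simpl; unfold opp, one; simpl; ring.
Qed.
Lemma WD_plus H G w P1 Q1 P2 Q2 : WD H w P1 Q1 -> WD G w P2 Q2 ->
  WD (fun v => Cplus (H v) (G v)) w (Cplus P1 P2) (Cplus Q1 Q2).
Proof. intros [a b] [c d]; split; (eapply CD_val; [|apply CD_plus; eauto]); ring. Qed.
Lemma WD_minus H G w P1 Q1 P2 Q2 : WD H w P1 Q1 -> WD G w P2 Q2 ->
  WD (fun v => Cminus (H v) (G v)) w (Cminus P1 P2) (Cminus Q1 Q2).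
Proof. intros [a b] [c d]; split; (eapply CD_val; [|apply CD_minus; eauto]); ring. Qed.
Lemma WD_mult H G w P1 Q1 P2 Q2 : WD H w P1 Q1 -> WD G w P2 Q2 ->
  WD (fun v => Cmult (H v) (G v)) w (Cplus (Cmult P1 (G w)) (Cmult (H w) P2))
     (Cplus (Cmult Q1 (G w)) (Cmult (H w) Q2)).
Proof. intros [a b] [c d]; split; (eapply CD_val; [|apply CD_mult; eauto]);
  destruct w; simpl; ring. Qed.
Lemma WD_inv H w P Q : WD H w P Q -> H w <> 0%C ->
  WD (fun v => Cinv (H v)) w (Copp (Cdiv P (Cmult (H w) (H w)))) (Copp (Cdiv Q (Cmult (H w) (H w)))).
Proof. intros [a b] Hn; destruct w as [x y]; simpl in *; split;
  (eapply CD_val; [|apply CD_inv; eauto]); simpl; field; auto. Qed.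
Definition nc (n : nat) : C := RtoC (INR n).
Lemma nc_S n : nc (S n) = Cplus (nc n) 1.
Proof. unfold nc; rewrite S_INR, RtoC_plus; auto. Qed.
Lemma nc_0 : nc 0 = 0%C.
Proof. reflexivity. Qed.
Lemma WD_pow H w P Q n : WD H w P Q ->
  WD (fun v => Cpow (H v) n) w (Cmult (nc n) (Cmult (Cpow (H w) (pred n)) P))
     (Cmult (nc n) (Cmult (Cpow (H w) (pred n)) Q)).
Proof. intros Hd. induction n.
  - cbn [Cpow pred]. eapply WD_val; [| |apply WD_const]; rewrite nc_0; ring.
  - eapply WD_ext; [intros; simpl; reflexivity|].
    eapply WD_val; [| |apply WD_mult; [apply Hd|apply IHn]].
    + destruct n; cbn [Cpow pred]; rewrite ?nc_S, ?nc_0; ring.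
    + destruct n; cbn [Cpow pred]; rewrite ?nc_S, ?nc_0; ring.
Qed.

Lemma dzdzb_WD (F : vec -> C) x j P Q :
  WD (fun w => F (upd x j w)) (x j) P Q -> dz j F x = P /\ dzb j F x = Q.
Proof. intros [[a b] [c d]].
  assert (Ex : dx j F x = Cplus P Q).
  { unfold dx.
    assert (E1 : Derive (fun t => fst (F (upd x j (t, snd (x j))))) (fst (x j)) = fst (Cplus P Q)) by (apply is_derive_unique; exact a).
    assert (E2 : Derive (fun t => snd (F (upd x j (t, snd (x j))))) (fst (x j)) = snd (Cplus P Q)) by (apply is_derive_unique; exact b).
    rewrite E1, E2. destruct (Cplus P Q); reflexivity. }
  assert (Ey : dy j F x = Cmult Ci (Cminus P Q)).
  { unfold dy.
    assert (E1 : Derive (fun t => fst (F (upd x j (fst (x j), t)))) (snd (x j)) = fst (Cmult Ci (Cminus P Q))) by (apply is_derive_unique; exact c).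
    assert (E2 : Derive (fun t => snd (F (upd x j (fst (x j), t)))) (snd (x j)) = snd (Cmult Ci (Cminus P Q))) by (apply is_derive_unique; exact d).
    rewrite E1, E2. destruct (Cmult Ci (Cminus P Q)); reflexivity. }
  unfold dz, dzb; rewrite Ex, Ey; destruct P, Q; split; ceq.
Qed.

Open Scope R_scope.

Lemma upd_same x j : upd x j (x j) = x.
Proof. apply functional_extensionality; intro k; unfold upd. destruct (Nat.eqb_spec k j); subst; auto. Qed.
Lemma upd_eq x j w : upd x j w j = w.
Proof. unfold upd; rewrite Nat.eqb_refl; auto. Qed.
Lemma upd_neq x j w k : k <> j -> upd x j w k = x k.
Proof. intros H; unfold upd; destruct (Nat.eqb_spec k j); tauto. Qed.

Lemma Csum_ext N f g : (forall k, (k < N)%nat -> f k = g k) -> Csum N f = Csum N g.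
Proof. induction N; simpl; intros H; auto. rewrite IHN, H; auto. Qed.
Lemma Csum_plus N f g : Csum N (fun k => Cplus (f k) (g k)) = Cplus (Csum N f) (Csum N g).
Proof. induction N; simpl. ring. rewrite IHN; ring. Qed.
Lemma Csum_minus N f g : Csum N (fun k => Cminus (f k) (g k)) = Cminus (Csum N f) (Csum N g).
Proof. induction N; simpl. ring. rewrite IHN; ring. Qed.
Lemma Csum_scal N c f : Csum N (fun k => Cmult c (f k)) = Cmult c (Csum N f).
Proof. induction N; simpl. ring. rewrite IHN; ring. Qed.
Lemma Csum_0 N : Csum N (fun _ => 0%C) = 0%C.
Proof. induction N; simpl; auto. rewrite IHN; ring. Qed.
Lemma Csum_conj N f : Cconj (Csum N f) = Csum N (fun k => Cconj (f k)).
Proof. induction N; simpl. apply injective_projections; simpl; ring. rewrite Cplus_conj, IHN; auto. Qed.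
Lemma Csum_upd N (f : nat -> C -> C) x j w : (j < N)%nat ->
  Csum N (fun k => f k (upd x j w k)) = Cplus (Cminus (Csum N (fun k => f k (x k))) (f j (x j))) (f j w).
Proof. induction N; intros H; [lia|]. simpl.
  destruct (Nat.eq_dec j N).
  - subst. rewrite upd_eq.
    rewrite (Csum_ext N (fun k => f k (upd x N w k)) (fun k => f k (x k))).
    + ring.
    + intros k Hk; rewrite upd_neq; auto; lia.
  - rewrite IHN by lia. rewrite upd_neq by auto. ring.
Qed.
Lemma Csum_swap M N (f : nat -> nat -> C) :
  Csum M (fun i => Csum N (fun k => f i k)) = Csum N (fun k => Csum M (fun i => f i k)).
Proof. induction M; simpl. rewrite Csum_0; auto. rewrite IHM, <- Csum_plus; auto. Qed.

Section Gen.
Variable N : nat.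

Definition Aa (zeta x : vec) : C := Cminus 1 (Csum N (fun k => Cmult (x k) (Cconj (zeta k)))).
Definition rr (x : vec) : C := Csum N (fun k => Cmult (x k) (Cconj (x k))).
Definition T (zeta : vec) (p q n : nat) (x : vec) : C :=
  Cmult (Cmult (Cinv (Cpow (Aa zeta x) p)) (Cinv (Cpow (Aa x zeta) q))) (Cpow (Cminus 1 (rr x)) n).

Lemma WD_A zeta x j : (j < N)%nat ->
  WD (fun w => Aa zeta (upd x j w)) (x j) (Copp (Cconj (zeta j))) 0.
Proof. intros Hj. unfold Aa.
  eapply WD_ext with (H := fun v => Cminus 1 (Cplus (Cminus (Csum N (fun k => Cmult (x k) (Cconj (zeta k)))) (Cmult (x j) (Cconj (zeta j)))) (Cmult v (Cconj (zeta j))))).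
  { intros v. pose proof (Csum_upd N (fun k y => Cmult y (Cconj (zeta k))) x j v Hj) as E; cbv beta in E; rewrite E; reflexivity. }
  eapply WD_val; [| | apply WD_minus; [apply WD_const| apply WD_plus; [apply WD_const| apply WD_mult; [apply WD_id | apply WD_const]]]]; cbv beta; ring.
Qed.
Lemma WD_B zeta x j : (j < N)%nat ->
  WD (fun w => Aa (upd x j w) zeta) (x j) 0 (Copp (zeta j)).
Proof. intros Hj. unfold Aa.
  eapply WD_ext with (H := fun v => Cminus 1 (Cplus (Cminus (Csum N (fun k => Cmult (zeta k) (Cconj (x k)))) (Cmult (zeta j) (Cconj (x j)))) (Cmult (zeta j) (Cconj v)))).
  { intros v. pose proof (Csum_upd N (fun k y => Cmult (zeta k) (Cconj y)) x j v Hj) as E; cbv beta in E; rewrite E; reflexivity. }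
  eapply WD_val; [| | apply WD_minus; [apply WD_const| apply WD_plus; [apply WD_const| apply WD_mult; [apply WD_const | apply WD_conj]]]]; cbv beta; ring.
Qed.
Lemma WD_r x j : (j < N)%nat ->
  WD (fun w => rr (upd x j w)) (x j) (Cconj (x j)) (x j).
Proof. intros Hj. unfold rr.
  eapply WD_ext with (H := fun v => Cplus (Cminus (Csum N (fun k => Cmult (x k) (Cconj (x k)))) (Cmult (x j) (Cconj (x j)))) (Cmult v (Cconj v))).
  { intros v. pose proof (Csum_upd N (fun k y => Cmult y (Cconj y)) x j v Hj) as E; cbv beta in E; rewrite E; reflexivity. }
  eapply WD_val; [| | apply WD_plus; [apply WD_const| apply WD_mult; [apply WD_id | apply WD_conj]]]; cbv beta; ring.
Qed.


Definition dzT zeta j p q n x : C :=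
  Cminus (Cmult (Cmult (nc p) (Cconj (zeta j))) (T zeta (S p) q n x))
         (Cmult (Cmult (nc n) (Cconj (x j))) (T zeta p q (pred n) x)).
Definition dzbT zeta j p q n x : C :=
  Cminus (Cmult (Cmult (nc q) (zeta j)) (T zeta p (S q) n x))
         (Cmult (Cmult (nc n) (x j)) (T zeta p q (pred n) x)).

Lemma WD_T zeta x j p q n : (j < N)%nat -> Aa zeta x <> 0%C -> Aa x zeta <> 0%C ->
  WD (fun w => T zeta p q n (upd x j w)) (x j) (dzT zeta j p q n x) (dzbT zeta j p q n x).
Proof. intros Hj Ha Hb. unfold T.
  assert (Hp : forall k, Cpow (Aa zeta x) k <> 0%C) by (intros; apply Cpow_nz; auto).
  assert (Hq : forall k, Cpow (Aa x zeta) k <> 0%C) by (intros; apply Cpow_nz; auto).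
  eapply WD_val; [| | apply WD_mult; [apply WD_mult; [apply WD_inv; [apply WD_pow, WD_A, Hj|]|apply WD_inv; [apply WD_pow, WD_B, Hj|]]|
    apply WD_pow, WD_minus; [apply WD_const| apply WD_r, Hj]]];
   cbv beta; rewrite ?upd_same; auto; unfold dzT, dzbT, T.
  - destruct p; destruct n; cbn [Cpow pred]; rewrite ?nc_S, ?nc_0; field; auto.
  - destruct q; destruct n; cbn [Cpow pred]; rewrite ?nc_S, ?nc_0; field; auto.
Qed.

Definition U zeta x := Aa zeta x <> 0%C /\ Aa x zeta <> 0%C.

Lemma nz_near (c d : C) : c <> 0%C -> exists eps, 0 < eps /\ forall h, Cmod h < eps -> Cplus c (Cmult h d) <> 0%C.
Proof. intros Hc. apply Cmod_gt_0 in Hc.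
  exists (Cmod c / (Cmod d + 1)). pose proof (Cmod_ge_0 d). split.
  - apply Rdiv_lt_0_compat; lra.
  - intros h Hh E.
    assert (E2 : c = Copp (Cmult h d)) by (rewrite <- (Cplus_0_r (Copp _)), <- E; ring).
    assert (Cmod c = Cmod h * Cmod d) by (rewrite E2, Cmod_opp, Cmod_mult; auto).
    pose proof (Cmod_ge_0 h).
    apply (Rmult_lt_compat_r (Cmod d + 1)) in Hh; [|lra].
    unfold Rdiv in Hh. rewrite Rmult_assoc, Rinv_l in Hh by lra. nra.
Qed.

Lemma Aa_upd zeta x j w : (j < N)%nat ->
  Aa zeta (upd x j w) = Cplus (Aa zeta x) (Cmult (Cminus w (x j)) (Copp (Cconj (zeta j)))).
Proof. intros Hj; unfold Aa.
  pose proof (Csum_upd N (fun k y => Cmult y (Cconj (zeta k))) x j w Hj) as E; cbv beta in E; rewrite E; ring. Qed.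
Lemma Ab_upd zeta x j w : (j < N)%nat ->
  Aa (upd x j w) zeta = Cplus (Aa x zeta) (Cmult (Cconj (Cminus w (x j))) (Copp (zeta j))).
Proof. intros Hj; unfold Aa. rewrite Cminus_conj.
  pose proof (Csum_upd N (fun k y => Cmult (zeta k) (Cconj y)) x j w Hj) as E; cbv beta in E; rewrite E; ring. Qed.

Lemma U_near zeta x j : U zeta x -> (j < N)%nat ->
  exists eps, 0 < eps /\ forall w, Cmod (Cminus w (x j)) < eps -> U zeta (upd x j w).
Proof. intros [Ha Hb] Hj.
  destruct (nz_near _ (Copp (Cconj (zeta j))) Ha) as [e1 [He1 H1]].
  destruct (nz_near _ (Copp (zeta j)) Hb) as [e2 [He2 H2]].
  exists (Rmin e1 e2); split; [apply Rmin_pos; auto|].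
  intros w Hw. split.
  - rewrite Aa_upd by auto. apply H1. pose proof (Rmin_l e1 e2); lra.
  - rewrite Ab_upd by auto. apply H2. rewrite Cmod_conj. pose proof (Rmin_r e1 e2); lra.
Qed.

Lemma loc_of (P : R -> Prop) t0 eps : 0 < eps -> (forall t, Rabs (t - t0) < eps -> P t) -> locally t0 P.
Proof. intros He H. exists (mkposreal eps He). intros t Ht. apply H. exact Ht. Qed.

Lemma Cmod_re (t y t0 : R) : Cmod (Cminus (t, y) (t0, y)) = Rabs (t - t0).
Proof. unfold Cmod; simpl. replace (y + - y) with 0 by ring.
  rewrite <- sqrt_Rsqr_abs. f_equal. unfold Rsqr. ring. Qed.
Lemma Cmod_im (t y x0 : R) : Cmod (Cminus (x0, t) (x0, y)) = Rabs (t - y).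
Proof. unfold Cmod; simpl. replace (x0 + - x0) with 0 by ring.
  rewrite <- sqrt_Rsqr_abs. f_equal. unfold Rsqr. ring. Qed.

Definition agreeU zeta (F G : vec -> C) := forall x, U zeta x -> F x = G x.

Lemma agree_dx zeta F G j : (j < N)%nat -> agreeU zeta F G -> agreeU zeta (dx j F) (dx j G).
Proof. intros Hj H x Ux. destruct (U_near zeta x j Ux Hj) as [e [He Hn]].
  assert (L : locally (fst (x j)) (fun t => F (upd x j (t, snd (x j))) = G (upd x j (t, snd (x j))))).
  { apply (loc_of _ _ e He). intros t Ht. apply H, Hn.
    destruct (x j) as [a b]; simpl. rewrite Cmod_re; auto. }
  unfold dx. f_equal; (apply Derive_ext_loc; eapply filter_imp; [|exact L]; intros t Et; first [exact (f_equal fst Et) | exact (f_equal snd Et)]).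
Qed.
Lemma agree_dy zeta F G j : (j < N)%nat -> agreeU zeta F G -> agreeU zeta (dy j F) (dy j G).
Proof. intros Hj H x Ux. destruct (U_near zeta x j Ux Hj) as [e [He Hn]].
  assert (L : locally (snd (x j)) (fun t => F (upd x j (fst (x j), t)) = G (upd x j (fst (x j), t)))).
  { apply (loc_of _ _ e He). intros t Ht. apply H, Hn.
    destruct (x j) as [a b]; simpl. rewrite Cmod_im; auto. }
  unfold dy. f_equal; (apply Derive_ext_loc; eapply filter_imp; [|exact L]; intros t Et; first [exact (f_equal fst Et) | exact (f_equal snd Et)]).
Qed.
Lemma agree_dz zeta F G j : (j < N)%nat -> agreeU zeta F G -> agreeU zeta (dz j F) (dz j G).
Proof. intros Hj H x Ux. unfold dz. rewrite (agree_dx zeta F G j Hj H x Ux), (agree_dy zeta F G j Hj H x Ux); auto. Qed.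
Lemma agree_dzb zeta F G j : (j < N)%nat -> agreeU zeta F G -> agreeU zeta (dzb j F) (dzb j G).
Proof. intros Hj H x Ux. unfold dzb. rewrite (agree_dx zeta F G j Hj H x Ux), (agree_dy zeta F G j Hj H x Ux); auto. Qed.
Lemma agree_E zeta F G : agreeU zeta F G -> agreeU zeta (Eop N F) (Eop N G).
Proof. intros H x Ux. unfold Eop. apply Csum_ext; intros j Hj. rewrite (agree_dz zeta F G j Hj H x Ux); auto. Qed.
Lemma agree_Eb zeta F G : agreeU zeta F G -> agreeU zeta (Ebop N F) (Ebop N G).
Proof. intros H x Ux. unfold Ebop. apply Csum_ext; intros j Hj. rewrite (agree_dzb zeta F G j Hj H x Ux); auto. Qed.
Lemma agree_Lap zeta F G : agreeU zeta F G -> agreeU zeta (Lap N F) (Lap N G).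
Proof. intros H x Ux. unfold Lap. apply Csum_ext; intros j Hj.
  apply (agree_dz zeta _ _ j Hj (agree_dzb zeta F G j Hj H) x Ux). Qed.
Lemma agree_absEs zeta s F G : agreeU zeta F G -> agreeU zeta (absEs N s F) (absEs N s G).
Proof. intros H x Ux. unfold absEs; cbv zeta.
  assert (HG : agreeU zeta (fun z => Cplus (Ebop N F z) (Cmult (RtoC s) (F z)))
                           (fun z => Cplus (Ebop N G z) (Cmult (RtoC s) (G z)))).
  { intros y Uy. rewrite (agree_Eb zeta F G H y Uy), (H y Uy); auto. }
  rewrite (agree_E zeta _ _ HG x Ux), (HG x Ux); auto. Qed.
Lemma agree_Lop zeta s F G : agreeU zeta F G -> agreeU zeta (Lop N s F) (Lop N s G).
Proof. intros H x Ux. unfold Lop. rewrite (agree_absEs zeta s F G H x Ux), (agree_Lap zeta F G H x Ux); auto. Qed.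

Local Open Scope list_scope.
Inductive tm := Tm (c : C) (p q n : nat).

Fixpoint eval zeta (X : list tm) (x : vec) : C :=
  match X with
  | nil => 0%C
  | Tm c p q n :: X' => Cplus (Cmult c (T zeta p q n x)) (eval zeta X' x)
  end.
Fixpoint sc (a : C) (X : list tm) : list tm :=
  match X with
  | nil => nil
  | Tm c p q n :: X' => Tm (Cmult a c) p q n :: sc a X'
  end.
Lemma eval_app zeta X Y x : eval zeta (X ++ Y) x = Cplus (eval zeta X x) (eval zeta Y x).
Proof. induction X as [|[c p q n] X IH]; simpl. ring. rewrite IH; ring. Qed.
Lemma eval_sc zeta a X x : eval zeta (sc a X) x = Cmult a (eval zeta X x).
Proof. induction X as [|[c p q n] X IH]; simpl. ring. rewrite IH; ring. Qed.

Fixpoint dzE zeta (X : list tm) j x : C :=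
  match X with
  | nil => 0%C
  | Tm c p q n :: X' => Cplus (Cmult c (dzT zeta j p q n x)) (dzE zeta X' j x)
  end.
Fixpoint dzbE zeta (X : list tm) j x : C :=
  match X with
  | nil => 0%C
  | Tm c p q n :: X' => Cplus (Cmult c (dzbT zeta j p q n x)) (dzbE zeta X' j x)
  end.

Lemma WD_eval zeta X x j : (j < N)%nat -> U zeta x ->
  WD (fun w => eval zeta X (upd x j w)) (x j) (dzE zeta X j x) (dzbE zeta X j x).
Proof. intros Hj [Ha Hb]. induction X as [|[c p q n] X IH]; simpl.
  - apply WD_const.
  - eapply WD_val; [| | apply WD_plus; [apply WD_mult; [apply WD_const | apply WD_T; auto] | apply IH]];
    cbv beta; ring.
Qed.
Lemma dz_eval zeta X x j : (j < N)%nat -> U zeta x -> dz j (eval zeta X) x = dzE zeta X j x.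
Proof. intros Hj Ux. apply (dzdzb_WD _ _ _ _ _ (WD_eval zeta X x j Hj Ux)). Qed.
Lemma dzb_eval zeta X x j : (j < N)%nat -> U zeta x -> dzb j (eval zeta X) x = dzbE zeta X j x.
Proof. intros Hj Ux. apply (dzdzb_WD _ _ _ _ _ (WD_eval zeta X x j Hj Ux)). Qed.

Lemma Csum_const c : Csum N (fun _ => c) = Cmult (nc N) c.
Proof. clear. induction N as [|n IH]; simpl. rewrite nc_0; ring. rewrite IH, nc_S; ring. Qed.

Ltac nzC := repeat split; try apply Cmult_neq_0; try apply Cpow_nz; auto.

Lemma T_Sp zeta p q n x : U zeta x -> Cmult (Aa zeta x) (T zeta (S p) q n x) = T zeta p q n x.
Proof. intros [Ha Hb]. unfold T; cbn [Cpow]. field; repeat split; try apply Cmult_neq_0; try apply Cpow_nz; auto. Qed.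
Lemma T_Sq zeta p q n x : U zeta x -> Cmult (Aa x zeta) (T zeta p (S q) n x) = T zeta p q n x.
Proof. intros [Ha Hb]. unfold T; cbn [Cpow]. field; repeat split; try apply Cmult_neq_0; try apply Cpow_nz; auto. Qed.
Lemma T_Sn zeta p q n x : Cmult (Cminus 1 (rr x)) (T zeta p q n x) = T zeta p q (S n) x.
Proof. unfold T; cbn [Cpow]. ring. Qed.

Definition El1 (t : tm) : list tm :=
  let 'Tm c p q n := t in
  Tm (Cmult c (nc p)) (S p) q n :: Tm (Cmult c (Cminus (nc n) (nc p))) p q n ::
  Tm (Copp (Cmult c (nc n))) p q (pred n) :: nil.
Definition Ebl1 (t : tm) : list tm :=
  let 'Tm c p q n := t in
  Tm (Cmult c (nc q)) p (S q) n :: Tm (Cmult c (Cminus (nc n) (nc q))) p q n ::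
  Tm (Copp (Cmult c (nc n))) p q (pred n) :: nil.
Fixpoint El (X : list tm) : list tm := match X with nil => nil | t :: X' => El1 t ++ El X' end.
Fixpoint Ebl (X : list tm) : list tm := match X with nil => nil | t :: X' => Ebl1 t ++ Ebl X' end.

Lemma Eop_eval zeta X x : U zeta x -> Eop N (eval zeta X) x = eval zeta (El X) x.
Proof. intros Ux. unfold Eop.
  rewrite (Csum_ext N _ (fun j => Cmult (x j) (dzE zeta X j x))) by (intros; apply f_equal, dz_eval; auto).
  induction X as [|[c p q n] X IH]; simpl.
  - rewrite (Csum_ext N _ (fun _ => 0%C)) by (intros; ring); apply Csum_0.
  - rewrite <- IH.
    rewrite (Csum_ext N _ (fun j => Cplus (Cmult (Cmult c (Cmult (nc p) (T zeta (S p) q n x))) (Cmult (x j) (Cconj (zeta j))))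
       (Cplus (Cmult (Copp (Cmult c (Cmult (nc n) (T zeta p q (pred n) x)))) (Cmult (x j) (Cconj (x j))))
              (Cmult (x j) (dzE zeta X j x))))) by (intros; unfold dzT; ring).
    rewrite !Csum_plus, !Csum_scal. fold (rr x).
    replace (Csum N (fun j => Cmult (x j) (Cconj (zeta j)))) with (Cminus 1 (Aa zeta x)) by (unfold Aa; ring).
    simpl.
    destruct Ux as [Ha Hb].
    destruct n as [|n]; cbn [pred]; unfold T; cbn [Cpow]; rewrite ?nc_0; field; nzC.
Qed.

Lemma Ebop_eval zeta X x : U zeta x -> Ebop N (eval zeta X) x = eval zeta (Ebl X) x.
Proof. intros Ux. unfold Ebop.
  rewrite (Csum_ext N _ (fun j => Cmult (Cconj (x j)) (dzbE zeta X j x))) by (intros; apply f_equal, dzb_eval; auto).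
  induction X as [|[c p q n] X IH]; simpl.
  - rewrite (Csum_ext N _ (fun _ => 0%C)) by (intros; ring); apply Csum_0.
  - rewrite <- IH.
    rewrite (Csum_ext N _ (fun j => Cplus (Cmult (Cmult c (Cmult (nc q) (T zeta p (S q) n x))) (Cmult (zeta j) (Cconj (x j))))
       (Cplus (Cmult (Copp (Cmult c (Cmult (nc n) (T zeta p q (pred n) x)))) (Cmult (x j) (Cconj (x j))))
              (Cmult (Cconj (x j)) (dzbE zeta X j x))))) by (intros; unfold dzbT; ring).
    rewrite !Csum_plus, !Csum_scal. fold (rr x).
    replace (Csum N (fun j => Cmult (zeta j) (Cconj (x j)))) with (Cminus 1 (Aa x zeta)) by (unfold Aa; ring).
    simpl.
    destruct Ux as [Ha Hb].
    destruct n as [|n]; cbn [pred]; unfold T; cbn [Cpow]; rewrite ?nc_0; field; nzC.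
Qed.

Definition ddT zeta j p q n x : C :=
  Cminus (Cmult (Cmult (nc q) (zeta j)) (dzT zeta j p (S q) n x))
    (Cmult (nc n) (Cplus (T zeta p q (pred n) x) (Cmult (x j) (dzT zeta j p q (pred n) x)))).
Definition ddbT zeta j p q n x : C :=
  Cminus (Cmult (Cmult (nc q) (zeta j)) (dzbT zeta j p (S q) n x))
    (Cmult (nc n) (Cmult (x j) (dzbT zeta j p q (pred n) x))).
Fixpoint ddE zeta (X : list tm) j x : C :=
  match X with
  | nil => 0%C
  | Tm c p q n :: X' => Cplus (Cmult c (ddT zeta j p q n x)) (ddE zeta X' j x)
  end.
Fixpoint ddbE zeta (X : list tm) j x : C :=
  match X with
  | nil => 0%C
  | Tm c p q n :: X' => Cplus (Cmult c (ddbT zeta j p q n x)) (ddbE zeta X' j x)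
  end.

Lemma WD_upd_j x j : WD (fun w => upd x j w j) (x j) 1 0.
Proof. eapply WD_ext; [|apply WD_id]. intros; rewrite upd_eq; auto. Qed.

Lemma WD_dzbT zeta x j p q n : (j < N)%nat -> U zeta x ->
  WD (fun w => dzbT zeta j p q n (upd x j w)) (x j) (ddT zeta j p q n x) (ddbT zeta j p q n x).
Proof. intros Hj [Ha Hb]. unfold dzbT.
  eapply WD_val; [| | apply WD_minus;
     [apply WD_mult; [apply WD_const| apply WD_T; auto]
     |apply WD_mult; [apply WD_mult; [apply WD_const | apply WD_upd_j] | apply WD_T; auto]]];
  cbv beta; rewrite ?upd_eq, ?upd_same; unfold ddT, ddbT; ring.
Qed.

Lemma WD_dzbE zeta X x j : (j < N)%nat -> U zeta x ->
  WD (fun w => dzbE zeta X j (upd x j w)) (x j) (ddE zeta X j x) (ddbE zeta X j x).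
Proof. intros Hj Ux. induction X as [|[c p q n] X IH]; simpl.
  - apply WD_const.
  - eapply WD_val; [| | apply WD_plus; [apply WD_mult; [apply WD_const | apply WD_dzbT; auto] | apply IH]];
    cbv beta; ring.
Qed.

Definition Lapl1 zeta (t : tm) : list tm :=
  let 'Tm c p q n := t in
  Tm (Cmult (Cmult (Cmult c (nc q)) (nc p)) (rr zeta)) (S p) (S q) n ::
  Tm (Copp (Cmult (Cmult c (nc q)) (nc n))) p (S q) (pred n) ::
  Tm (Cmult (Cmult c (nc q)) (nc n)) p q (pred n) ::
  Tm (Copp (Cmult (Cmult c (nc n)) (nc N))) p q (pred n) ::
  Tm (Copp (Cmult (Cmult c (nc n)) (nc p))) (S p) q (pred n) ::
  Tm (Cmult (Cmult c (nc n)) (nc p)) p q (pred n) ::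
  Tm (Cmult (Cmult c (nc n)) (nc (pred n))) p q (pred (pred n)) ::
  Tm (Copp (Cmult (Cmult c (nc n)) (nc (pred n)))) p q (pred n) :: nil.
Fixpoint Lapl zeta (X : list tm) : list tm :=
  match X with nil => nil | t :: X' => Lapl1 zeta t ++ Lapl zeta X' end.

Lemma Lap_eval zeta X x : U zeta x -> Lap N (eval zeta X) x = eval zeta (Lapl zeta X) x.
Proof. intros Ux. unfold Lap.
  rewrite (Csum_ext N _ (fun j => ddE zeta X j x)).
  2:{ intros j Hj.
      rewrite (agree_dz zeta (dzb j (eval zeta X)) (fun y => dzbE zeta X j y) j Hj) by
        (auto; intros y Uy; apply dzb_eval; auto).
      apply (dzdzb_WD _ _ _ _ _ (WD_dzbE zeta X x j Hj Ux)). }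
  induction X as [|[c p q n] X IH]; simpl.
  - apply Csum_0.
  - rewrite <- IH.
    rewrite (Csum_ext N _ (fun j => Cplus (Cmult (Cmult c (Cmult (Cmult (nc q) (nc p)) (T zeta (S p) (S q) n x))) (Cmult (zeta j) (Cconj (zeta j))))
       (Cplus (Cmult (Copp (Cmult c (Cmult (Cmult (nc q) (nc n)) (T zeta p (S q) (pred n) x)))) (Cmult (zeta j) (Cconj (x j))))
       (Cplus (Copp (Cmult c (Cmult (nc n) (T zeta p q (pred n) x))))
       (Cplus (Cmult (Copp (Cmult c (Cmult (Cmult (nc n) (nc p)) (T zeta (S p) q (pred n) x)))) (Cmult (x j) (Cconj (zeta j))))
       (Cplus (Cmult (Cmult c (Cmult (Cmult (nc n) (nc (pred n))) (T zeta p q (pred (pred n)) x))) (Cmult (x j) (Cconj (x j))))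
              (ddE zeta X j x))))))) by (intros; unfold ddT, dzT; ring).
    rewrite !Csum_plus, !Csum_scal, Csum_const. fold (rr x). fold (rr zeta).
    replace (Csum N (fun j => Cmult (x j) (Cconj (zeta j)))) with (Cminus 1 (Aa zeta x)) by (unfold Aa; ring).
    replace (Csum N (fun j => Cmult (zeta j) (Cconj (x j)))) with (Cminus 1 (Aa x zeta)) by (unfold Aa; ring).
    simpl.
    destruct Ux as [Ha Hb].
    destruct n as [|[|n]]; cbn [pred]; unfold T; cbn [Cpow]; rewrite ?nc_0; field; nzC.
Qed.

Definition AbsL (s : C) (X : list tm) : list tm :=
  let Y := Ebl X ++ sc s X in El Y ++ sc s Y.
Definition Ll zeta (s : C) (X : list tm) : list tm :=
  AbsL s X ++ sc (Copp 1) (Lapl zeta X).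

Lemma absEs_agree zeta s F X : agreeU zeta F (eval zeta X) ->
  agreeU zeta (absEs N s F) (eval zeta (AbsL (RtoC s) X)).
Proof. intros H x Ux. rewrite (agree_absEs zeta s F (eval zeta X) H x Ux).
  unfold absEs, AbsL; cbv zeta.
  assert (HG : agreeU zeta (fun z => Cplus (Ebop N (eval zeta X) z) (Cmult (RtoC s) (eval zeta X z)))
                           (eval zeta (Ebl X ++ sc (RtoC s) X))).
  { intros y Uy. rewrite eval_app, eval_sc, Ebop_eval; auto. }
  rewrite (agree_E zeta _ _ HG x Ux), (HG x Ux), Eop_eval by auto. rewrite !eval_app, !eval_sc. rewrite (eval_app zeta (Ebl X)). rewrite eval_sc. ring.
Qed.
Lemma Lop_agree zeta s F X : agreeU zeta F (eval zeta X) ->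
  agreeU zeta (Lop N s F) (eval zeta (Ll zeta (RtoC s) X)).
Proof. intros H x Ux. unfold Lop, Ll.
  rewrite (absEs_agree zeta s F X H x Ux), (agree_Lap zeta F (eval zeta X) H x Ux), Lap_eval by auto.
  rewrite eval_app, eval_sc. ring.
Qed.

End Gen.

Open Scope R_scope.
Local Open Scope list_scope.

Ltac nzC := repeat split; try apply Cmult_neq_0; try apply Cpow_nz; auto.

Lemma nc_mult a b : nc (a * b) = Cmult (nc a) (nc b).
Proof. unfold nc; rewrite mult_INR, RtoC_mult; auto. Qed.
Lemma nc_fact k : nc (fact (S k)) = Cmult (Cplus (nc k) 1) (nc (fact k)).
Proof. change (fact (S k)) with (S k * fact k)%nat. rewrite nc_mult, nc_S; auto. Qed.

Definition X1 N (z : vec) (k : nat) : list tm :=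
  let fS := nc (fact (S k)) in let fk := nc (fact k) in let tau := Cminus 1 (rr N z) in
  Tm (Cmult (Cmult fS fS) (Cpow tau (S k))) (S (S k)) (S (S k)) 0 ::
  Tm (Copp (Cmult (Cmult fS fS) (Cpow tau k))) (S k) (S (S k)) 0 ::
  Tm (Copp (Cmult (Cmult fS fS) (Cpow tau k))) (S (S k)) (S k) 0 ::
  Tm (Cplus (Cmult (Cmult fS fS) (Cpow tau k))
            (Cmult (Cmult (Cmult (Cmult fk fk) (nc k)) (nc (S k))) (Cmult (rr N z) (Cpow tau (pred k))))) (S k) (S k) 0 :: nil.

Lemma X1_step N z k x : U N z x ->
  eval N z (Ll N z (nc (S (S k))) (X1 N z (S k))) x = eval N z (X1 N z (S (S k))) x.
Proof. intros [Ha Hb]. unfold X1, Ll, AbsL. cbn [Lapl Lapl1 El El1 Ebl Ebl1 sc app eval pred].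
  unfold T. cbn [Cpow]. rewrite !nc_fact, !nc_S, ?nc_0.
  generalize (nc k) (nc (fact k)) (rr N z) (rr N x) (nc N). intros.
  Time field; nzC.
Qed.

Ltac solve_id := unfold X1, Ll, AbsL; cbn [Lapl Lapl1 El El1 Ebl Ebl1 sc app eval pred];
  unfold T; cbn [Cpow]; rewrite ?nc_fact, ?nc_S, ?nc_0;
  generalize (nc (fact 0)); intros; field; nzC.

Lemma X1_step0 N z x : U N z x ->
  eval N z (Ll N z (nc 1) (X1 N z 0)) x = eval N z (X1 N z 1) x.
Proof. intros [Ha Hb]. unfold X1, Ll, AbsL; cbn [Lapl Lapl1 El El1 Ebl Ebl1 sc app eval pred].
  unfold T; cbn [Cpow]. rewrite ?nc_fact. change (fact 0) with 1%nat. rewrite ?nc_S, ?nc_0. field; nzC. Qed.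
Lemma X1_base N z x : U N z x ->
  eval N z (Ll N z (RtoC 0) (Tm 1 1 1 0 :: nil)) x = eval N z (X1 N z 0) x.
Proof. intros [Ha Hb]. unfold X1, Ll, AbsL; cbn [Lapl Lapl1 El El1 Ebl Ebl1 sc app eval pred].
  unfold T; cbn [Cpow]. rewrite ?nc_fact. change (fact 0) with 1%nat. rewrite ?nc_S, ?nc_0. field; nzC. Qed.

Definition X2 N (z : vec) (k : nat) : list tm :=
  let fS := nc (fact (S k)) in let fk := nc (fact k) in let tau := Cminus 1 (rr N z) in
  Tm (Cmult (Cmult fS fS) (Cpow tau (S k))) (S (S k)) (S (S k)) 1 ::
  Tm (Cmult (Cmult (Cmult (Cmult fk fk) (nc (S k))) (Cminus (nc N) (nc (S k)))) (Cpow tau k)) (S k) (S k) 0 :: nil.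

Lemma X2_step N z k x : U N z x ->
  eval N z (Ll N z (nc (S k)) (X2 N z k)) x = eval N z (X2 N z (S k)) x.
Proof. intros [Ha Hb]. unfold X2, Ll, AbsL. cbn [Lapl Lapl1 El El1 Ebl Ebl1 sc app eval pred].
  unfold T. cbn [Cpow]. rewrite !nc_fact, !nc_S, ?nc_0.
  generalize (nc k) (nc (fact k)) (rr N z) (rr N x) (nc N). intros.
  Time field; nzC.
Qed.
Lemma X2_base N z x : U N z x ->
  eval N z (Ll N z (RtoC 0) (Tm 1 1 1 1 :: nil)) x = eval N z (X2 N z 0) x.
Proof. intros [Ha Hb]. unfold X2, Ll, AbsL; cbn [Lapl Lapl1 El El1 Ebl Ebl1 sc app eval pred].
  unfold T; cbn [Cpow]. rewrite ?nc_fact. change (fact 0) with 1%nat. rewrite ?nc_S, ?nc_0. field; nzC. Qed.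

Lemma final1 N z xi m : U N z xi -> U N xi z ->
  eval N z (X1 N z (S m)) xi =
  eval N xi (AbsL (RtoC 0) (Tm (Cmult (nc (fact (S m))) (nc (fact (S m)))) (S (S m)) (S (S m)) (S (S m)) :: nil)) z.
Proof. intros [Ha Hb] _. unfold X1, AbsL; cbn [Lapl Lapl1 El El1 Ebl Ebl1 sc app eval pred].
  unfold T. cbn [Cpow]. rewrite !nc_fact, !nc_S, ?nc_0.
  generalize (nc m) (nc (fact m)) (rr N z) (rr N xi) (nc N). intros.
  Time field; nzC.
Qed.
Lemma final2 N z xi m : U N z xi -> U N xi z ->
  eval N z (X2 N z (S m)) xi =
  eval N xi (Ll N xi (RtoC 0) (Tm (Cmult (nc (fact (S m))) (nc (fact (S m)))) (S (S m)) (S (S m)) (S (S m)) :: nil)) z.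
Proof. intros [Ha Hb] _. unfold X2, Ll, AbsL; cbn [Lapl Lapl1 El El1 Ebl Ebl1 sc app eval pred].
  unfold T. cbn [Cpow]. rewrite !nc_fact, !nc_S, ?nc_0.
  generalize (nc m) (nc (fact m)) (rr N z) (rr N xi) (nc N). intros.
  Time field; nzC.
Qed.

Open Scope R_scope.
Local Open Scope list_scope.

Lemma agree_trans N zeta F X Y : agreeU N zeta F (eval N zeta X) ->
  (forall x, U N zeta x -> eval N zeta X x = eval N zeta Y x) -> agreeU N zeta F (eval N zeta Y).
Proof. intros H1 H2 x Ux. rewrite H1, H2; auto. Qed.

Lemma chain_gen N z F (X : nat -> list tm) X0 :
  agreeU N z F (eval N z X0) ->
  (forall x, U N z x -> eval N z (Ll N z (RtoC 0) X0) x = eval N z (X 0%nat) x) ->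
  (forall k x, U N z x -> eval N z (Ll N z (nc (S k)) (X k)) x = eval N z (X (S k)) x) ->
  forall k, agreeU N z (Lchain N k F) (eval N z (X k)).
Proof. intros H0 Hb Hs k. induction k as [|k IH]; simpl.
  - eapply agree_trans; [apply Lop_agree, H0| exact Hb].
  - eapply agree_trans; [apply Lop_agree, IH| apply Hs].
Qed.

Lemma Aa_conj N zeta x : Cconj (Aa N x zeta) = Aa N zeta x.
Proof. unfold Aa. rewrite Cminus_conj, Csum_conj. f_equal.
  - apply injective_projections; simpl; ring.
  - apply Csum_ext; intros; rewrite Cmult_conj, Cconj_conj; ring.
Qed.

Lemma Csum_RtoC_im N f : snd (Csum N (fun k => RtoC (f k))) = 0.
Proof. induction N; simpl; auto. rewrite IHN; ring. Qed.
Lemma rr_cnorm2 N x : rr N x = RtoC (cnorm2 N x).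
Proof. unfold cnorm2, rr.
  rewrite (Csum_ext N _ (fun k => RtoC (Cmod (x k) ^ 2))) by (intros; rewrite Cmod2_conj; auto).
  apply injective_projections; simpl; auto. apply Csum_RtoC_im.
Qed.

Lemma cinner_A N z x : Cminus (RtoC 1) (cinner N z x) = Aa N x z.
Proof. reflexivity. Qed.

Lemma Cmod2_nz (c : C) : c <> 0%C -> Cmod c ^ 2 <> 0.
Proof. intros H. apply pow_nonzero. intro E; apply H, Cmod_eq_0, E. Qed.

Lemma F1_agree N z : agreeU N z (fun x => RtoC (/ (Cmod (Cminus (RtoC 1) (cinner N z x)) ^ 2)))
  (eval N z (Tm 1 1 1 0 :: nil)).
Proof. intros x [Ha Hb]. rewrite cinner_A. rewrite RtoC_inv by (apply Cmod2_nz; auto).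
  rewrite Cmod2_conj, Aa_conj. simpl. unfold T; cbn [Cpow]. field; auto.
Qed.
Lemma F2_agree N z : agreeU N z (fun x => RtoC ((1 - cnorm2 N x) / Cmod (Cminus (RtoC 1) (cinner N z x)) ^ 2))
  (eval N z (Tm 1 1 1 1 :: nil)).
Proof. intros x [Ha Hb]. rewrite cinner_A. rewrite RtoC_div by (apply Cmod2_nz; auto).
  rewrite Cmod2_conj, Aa_conj, RtoC_minus, <- rr_cnorm2. simpl. unfold T; cbn [Cpow]. field; auto.
Qed.

Lemma Cpow_mult (a b : C) n : Cpow (Cmult a b) n = Cmult (Cpow a n) (Cpow b n).
Proof. induction n; simpl. ring. rewrite IHn; ring. Qed.

Lemma G_agree N xi m : agreeU N xi
  (fun w => RtoC (INR (fact (S m)) ^ 2 * (1 - cnorm2 N w) ^ (S m + 1)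
          / Cmod (Cminus (RtoC 1) (cinner N w xi)) ^ (2 * (S m + 1))))
  (eval N xi (Tm (Cmult (nc (fact (S m))) (nc (fact (S m)))) (S (S m)) (S (S m)) (S (S m)) :: nil)).
Proof. intros w [Ha Hb]. rewrite cinner_A, Nat.add_1_r, pow_mult.
  rewrite RtoC_div by (apply pow_nonzero, Cmod2_nz; auto).
  rewrite (RtoC_pow (Cmod _ ^ 2)), Cmod2_conj, RtoC_mult, !RtoC_pow, Aa_conj, RtoC_minus, <- rr_cnorm2.
  cbn [eval]. unfold T. rewrite Cpow_mult. fold (nc (fact (S m))). cbn [Cpow].
  field. repeat split; try apply Cmult_neq_0; try apply Cpow_nz; auto.
Qed.

Lemma Re_Csum_bound N (x y : vec) :
  fst (Csum N (fun k => Cmult (x k) (Cconj (y k)))) <=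
  (fst (Csum N (fun k => RtoC (Cmod (x k) ^ 2))) + fst (Csum N (fun k => RtoC (Cmod (y k) ^ 2)))) / 2.
Proof. induction N; cbn [Csum Cplus fst snd RtoC]. lra.
  rewrite !Cmod2_alt. unfold Re, Im in *. destruct (x N) as [a b]; destruct (y N) as [c d]; simpl in *. pose proof (Rle_0_sqr (a-c)); pose proof (Rle_0_sqr (b-d)); unfold Rsqr in *. nra.
Qed.

Lemma U_ball N z xi : inBall N z -> inBall N xi -> U N z xi.
Proof. unfold inBall, cnorm2, U, Aa. intros Hz Hx.
  pose proof (Re_Csum_bound N xi z) as B1. pose proof (Re_Csum_bound N z xi) as B2.
  unfold Re in *. split; intro E; apply (f_equal fst) in E; simpl in E; lra.
Qed.


Theorem lemma2p1 (N m : nat) (hm : (1 <= m)%nat) (z xi : vec)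
  (hz : inBall N z) (hxi : inBall N xi) :
  Lchain N m (fun x => RtoC (/ (Cmod (Cminus (RtoC 1) (cinner N z x)) ^ 2))) xi
  = absEs N 0 (fun w => RtoC (INR (fact m) ^ 2 * (1 - cnorm2 N w) ^ (m + 1)
          / Cmod (Cminus (RtoC 1) (cinner N w xi)) ^ (2 * (m + 1)))) z
  /\
  Lchain N m (fun x => RtoC ((1 - cnorm2 N x)
          / Cmod (Cminus (RtoC 1) (cinner N z x)) ^ 2)) xi
  = Lop N 0 (fun w => RtoC (INR (fact m) ^ 2 * (1 - cnorm2 N w) ^ (m + 1)
          / Cmod (Cminus (RtoC 1) (cinner N w xi)) ^ (2 * (m + 1)))) z.
Proof.
  destruct m as [|m]; [lia|].
  pose proof (U_ball N z xi hz hxi) as U1.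
  pose proof (U_ball N xi z hxi hz) as U2.
  split.
  - assert (Hs : forall k x, U N z x -> eval N z (Ll N z (nc (S k)) (X1 N z k)) x = eval N z (X1 N z (S k)) x)
      by (intros [|k] x Ux; [apply X1_step0 | apply X1_step]; auto).
    rewrite (chain_gen N z _ (X1 N z) _ (F1_agree N z) (X1_base N z) Hs (S m) xi U1).
    rewrite (absEs_agree N xi 0 _ _ (G_agree N xi m) z U2).
    apply final1; auto.
  - rewrite (chain_gen N z _ (X2 N z) _ (F2_agree N z) (X2_base N z) (X2_step N z) (S m) xi U1).
    rewrite (Lop_agree N xi 0 _ _ (G_agree N xi m) z U2).
    apply final2; auto.
Qed.
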